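(* Assume $\sum_{i=1}^{+\infty}\sqrt{\sigma_i}\,\|G_i\|_\infty<+\infty$ and let $\beta_G=\|G_0\|_\infty+\sum_{i=1}^{+\infty}\sqrt{\sigma_i}\|G_i\|_\infty|\eta_i|$ (a second-order positive random variable). Then for all $\mathbf{x}\in D$, $\|\mathbf{K}(\mathbf{x})\|_F\le\beta<+\infty$ almost surely, where $\beta$ is a positive-valued random variable independent of $\mathbf{x}$, as follows. (i) (Exponential type) If $[\mathbf{K}(\mathbf{x})]=\frac{1}{1+\varepsilon}[\underline L(\mathbf{x})]^T\{\varepsilon[I_n]+\exp_{\mathbb{M}}([\mathbf{G}(\mathbf{x})])\}[\underline L(\mathbf{x})]$, then $\beta=\underline k_1\sqrt{n}(\varepsilon+e^{\beta_G})/(1+\varepsilon)$. (ii) (Square type) If $[\mathbf{K}(\mathbf{x})]=\frac{1}{1+\varepsilon}[\underline L(\mathbf{x})]^T\{\varepsilon[I_n]+[\mathcal{L}([\mathbf{G}(\mathbf{x})])]^T[\mathcal{L}([\mathbf{G}(\mathbf{x})])]\}[\underline L(\mathbf{x})]$, then $\beta=\underline k_1(\sqrt{n}\,\varepsilon+\gamma_0+\gamma_1\beta_G^2)/(1+\varepsilon)$, where $\gamma_0$ and $\gamma_1$ are two positive finite real numbers, and moreover $E\{\beta\}<+\infty$.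
   Context: Let $d,n\ge1$, $D\subset\mathbb{R}^d$ bounded open; $\mathbb{M}_n^+(\mathbb{R})$, $\mathbb{M}_n^S(\mathbb{R})$ are the symmetric positive-definite and symmetric real $n\times n$ matrices; $\|\cdot\|_F$ Frobenius norm; $\langle\cdot,\cdot\rangle_2,\|\cdot\|_2$ Euclidean inner product and norm; for $[H]:D\to\mathbb{M}_n^S(\mathbb{R})$, $\|H\|_\infty=\operatorname{ess\,sup}_{\mathbf{x}\in D}\|H(\mathbf{x})\|_F$. Normalization: $[\underline K]:D\to\mathbb{M}_n^+(\mathbb{R})$ satisfies $\underline k_0\|\mathbf{z}\|_2^2\le\langle[\underline K(\mathbf{x})]\mathbf{z},\mathbf{z}\rangle_2\le n^{-1/2}\widetilde{\underline k}_1\|\mathbf{z}\|_2^2$ for all $\mathbf{x},\mathbf{z}$, with constants $0<\underline k_0<\widetilde{\underline k}_1<\infty$; $\underline k_1=n\widetilde{\underline k}_1$; $[\underline L(\mathbf{x})]$ is upper triangular with $[\underline K]=[\underline L]^T[\underline L]$; $\varepsilon>0$ fixed. $[\mathbf{G}]$ is a second-order random field on $D$ with values in $\mathbb{M}_n^S(\mathbb{R})$, mean $[G_0]$ with $\|G_0\|_\infty<\infty$, square-integrable covariance function $C_{\mathbf{G}}(\mathbf{x},\mathbf{x}')=E\{([\mathbf{G}(\mathbf{x})]-[G_0(\mathbf{x})])\otimes([\mathbf{G}(\mathbf{x}')]-[G_0(\mathbf{x}')])\}$, whose covariance operator has eigenvalues $\sigma_1\ge\sigma_2\ge\dots>0$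 and normalized eigenfunctions $[G_i]$, and Karhunen–Loève expansion $[\mathbf{G}(\mathbf{x})]=[G_0(\mathbf{x})]+\sum_{i\ge1}\sqrt{\sigma_i}[G_i(\mathbf{x})]\eta_i$ with $\{\eta_i\}$ uncorrelated, zero mean, unit variance. $\exp_{\mathbb{M}}$ is the matrix exponential. Square type: for each $a>0$, $h(\cdot;a):\mathbb{R}\to\mathbb{R}^+$ is strictly increasing with $h(g;a)\le c_a+c_hg^2$ for some $0<c_a,c_h<\infty$; for fixed positive $a_1,\dots,a_n$, $\mathcal{L}([G])$ is the upper triangular matrix with $[\mathcal{L}([G])]_{jj'}=[G]_{jj'}$ ($j<j'$) and $[\mathcal{L}([G])]_{jj}=\sqrt{h([G]_{jj};a_j)}$. *)

(* Defs.v *)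
From HB Require Import structures.
From mathcomp Require Import all_boot all_order all_algebra.
From mathcomp Require Import all_classical all_reals all_analysis.
Set Implicit Arguments. Unset Strict Implicit. Unset Printing Implicit Defensive.
Import Order.TTheory GRing.Theory Num.Theory.
Import numFieldNormedType.Exports.
Local Open Scope classical_set_scope.
Local Open Scope ring_scope.

Definition frob {R : realType} {n : nat} (A : 'M[R]_n) : R :=
  Num.sqrt (\sum_(i < n) \sum_(j < n) A i j ^+ 2).

Definition quadf {R : realType} {n : nat} (A : 'M[R]_n) (z : 'cV[R]_n) : R :=
  (z^T *m A *m z) 0 0.
Definition sqnorm2 {R : realType} {n : nat} (z : 'cV[R]_n) : R :=
  \sum_(i < n) z i 0 ^+ 2.

Definition sym_mx {R : realType} {n : nat} (A : 'M[R]_n) : Prop := A^T = A.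

Definition upper_tri {R : realType} {n : nat} (A : 'M[R]_n) : Prop :=
  forall i j : 'I_n, (j < i)%N -> A i j = 0.

Definition supnormF {R : realType} {d n : nat} (D : set 'rV[R]_d)
  (H : 'rV[R]_d -> 'M[R]_n) : \bar R :=
  ereal_sup [set (frob (H x))%:E | x in D].

Definition expM {R : realType} {n : nat} (A : 'M[R]_n) : 'M[R]_n :=
  limn (series (fun k : nat => (k`!%:R)^-1 *: A ^+ k)).

Definition calL {R : realType} {n : nat} (h : R -> R -> R) (a : 'I_n -> R)
  (G : 'M[R]_n) : 'M[R]_n :=
  \matrix_(j, j') if (j < j')%N then G j j'
                  else if j == j' then Num.sqrt (h (a j) (G j j)) else 0.

(* beta_G(w) = ||G_0||_oo + sum_{i>=1} sqrt(sigma_i) ||G_i||_oo |eta_i(w)|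
   (indices of the series shifted to start at 0) *)
Definition betaG {R : realType} {d n : nat} {T : Type} (D : set 'rV[R]_d)
  (G0 : 'rV[R]_d -> 'M[R]_n) (sigma : nat -> R) (Gi : nat -> 'rV[R]_d -> 'M[R]_n)
  (eta : nat -> T -> R) (w : T) : \bar R :=
  (supnormF D G0 +
   \sum_(0 <= i <oo) ((Num.sqrt (sigma i))%:E * supnormF D (Gi i) * (`|eta i w|)%:E))%E.

(* Main.v *)
Require Import Defs.
From HB Require Import structures.
From mathcomp Require Import all_boot all_order all_algebra.
From mathcomp Require Import all_classical all_reals all_analysis.
From mathcomp Require Import ring lra measurable_realfun.
Import Order.TTheory GRing.Theory Num.Theory.
Import numFieldNormedType.Exports.
Local Open Scope classical_set_scope.
Local Open Scope ring_scope.
Section CS.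
Context {R : realType}.
Lemma cs_ineq (I : finType) (a b : I -> R) :
  (\sum_i a i * b i) ^+ 2 <= (\sum_i a i ^+ 2) * (\sum_i b i ^+ 2).
Proof.
set A := \sum_i a i ^+ 2; set B := \sum_i b i ^+ 2; set S := \sum_i a i * b i.
have inner i : \sum_j (a i * b j - a j * b i) ^+ 2 =
   a i ^+ 2 * B + b i ^+ 2 * A - 2 * (a i * b i) * S.
  rewrite (eq_bigr (fun j => a i ^+2 * b j ^+2 + b i ^+2 * a j ^+2
     - 2*(a i * b i) * (a j * b j))); last by move=> j _; ring.
  by rewrite sumrB big_split /= -!mulr_sumr.
have H : 0 <= \sum_i \sum_j (a i * b j - a j * b i) ^+ 2.
  by apply: sumr_ge0 => i _; apply: sumr_ge0 => j _; exact: sqr_ge0.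
rewrite (eq_bigr _ (fun i _ => inner i)) sumrB big_split /= -!mulr_suml -mulr_sumr in H.
rewrite -/A -/B -/S in H.
lra.
Qed.
End CS.
Arguments cs_ineq {R I}.
Section Frob.
Context {R : realType} {n : nat}.
Implicit Types A B : 'M[R]_n.
Definition fsq A := \sum_i \sum_j A i j ^+ 2.
Lemma frobE A : frob A = Num.sqrt (fsq A). Proof. by []. Qed.
Lemma fsq_ge0 A : 0 <= fsq A.
Proof. by apply: sumr_ge0 => i _; apply: sumr_ge0 => j _; exact: sqr_ge0. Qed.
Lemma frob_ge0 A : 0 <= frob A. Proof. exact: sqrtr_ge0. Qed.
Lemma frob_sqr A : frob A ^+ 2 = fsq A. Proof. by rewrite sqr_sqrtr // fsq_ge0. Qed.
Lemma fsq_pair A : fsq A = \sum_(p : 'I_n * 'I_n) A p.1 p.2 ^+ 2.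
Proof. by rewrite /fsq pair_big. Qed.
Lemma fsq_tr A : fsq A^T = fsq A.
Proof. by rewrite /fsq exchange_big; apply: eq_bigr => i _; apply: eq_bigr => j _; rewrite mxE. Qed.
Lemma frob_tr A : frob A^T = frob A. Proof. by rewrite !frobE fsq_tr. Qed.
Lemma fsq_mul A B : fsq (A *m B) <= fsq A * fsq B.
Proof.
have EB : fsq B = \sum_j \sum_k B k j ^+ 2 by rewrite /fsq exchange_big.
rewrite EB /fsq mulr_suml; apply: ler_sum => i _.
rewrite mulr_sumr; apply: ler_sum => j _; rewrite mxE.
exact: (cs_ineq (fun k => A i k) (fun k => B k j)).
Qed.
Lemma frob_mul A B : frob (A *m B) <= frob A * frob B.
Proof. by rewrite !frobE -sqrtrM ?fsq_ge0 // ler_sqrt ?fsq_mul // mulr_ge0 // fsq_ge0. Qed.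
Lemma fsq_add A B : fsq (A + B) <= (frob A + frob B) ^+ 2.
Proof.
have cs : \sum_(p : 'I_n * 'I_n) A p.1 p.2 * B p.1 p.2 <= frob A * frob B.
  rewrite !frobE -sqrtrM ?fsq_ge0 //.
  apply: le_trans (ler_norm _) _; rewrite -sqrtr_sqr ler_sqrt ?mulr_ge0 ?fsq_ge0 //.
  by rewrite !fsq_pair; exact: cs_ineq.
rewrite sqrrD !frob_sqr !fsq_pair.
rewrite (eq_bigr (fun p => A p.1 p.2 ^+ 2 + B p.1 p.2 ^+ 2 + 2 * (A p.1 p.2 * B p.1 p.2)));
  last by move=> p _; rewrite mxE; ring.
rewrite !big_split /= -mulr_sumr; lra.
Qed.
Lemma frob_add A B : frob (A + B) <= frob A + frob B.
Proof.
rewrite frobE -(ger0_norm (addr_ge0 (frob_ge0 A) (frob_ge0 B))) -sqrtr_sqr.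
by rewrite ler_sqrt ?sqr_ge0 // fsq_add.
Qed.
Lemma fsq_scale (c : R) A : fsq (c *: A) = c ^+ 2 * fsq A.
Proof.
rewrite /fsq mulr_sumr; apply: eq_bigr => i _; rewrite mulr_sumr; apply: eq_bigr => j _.
by rewrite mxE exprMn.
Qed.
Lemma frob_scale (c : R) A : frob (c *: A) = `|c| * frob A.
Proof. by rewrite !frobE fsq_scale sqrtrM ?sqr_ge0 // sqrtr_sqr. Qed.
Lemma frob1 : frob (1%:M : 'M[R]_n) = Num.sqrt n%:R.
Proof.
rewrite frobE /fsq; congr Num.sqrt.
rewrite (eq_bigr (fun _ => 1)) ?sumr_const ?card_ord //.
move=> i _; rewrite (bigD1 i) //= big1 ?addr0; first by rewrite mxE eqxx expr1n.
by move=> j /negPf ji; rewrite mxE eq_sym ji /= expr0n.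
Qed.
Lemma entry_le_frob A i j : `|A i j| <= frob A.
Proof.
rewrite frobE -sqrtr_sqr ler_sqrt ?fsq_ge0 // /fsq.
rewrite (bigD1 i) //= (bigD1 j) //=.
rewrite -addrA lerDl; apply: addr_ge0.
  by apply: sumr_ge0 => k _; exact: sqr_ge0.
by apply: sumr_ge0 => k _; apply: sumr_ge0 => l _; exact: sqr_ge0.
Qed.
Lemma frob_sum (I : Type) (r : seq I) (F : I -> 'M[R]_n) :
  frob (\sum_(i <- r) F i) <= \sum_(i <- r) frob (F i).
Proof.
elim: r => [|x r IH]; first by rewrite !big_nil frobE /fsq big1 ?sqrtr0 // => i _; rewrite big1 // => j _; rewrite mxE expr0n.
rewrite !big_cons; apply: le_trans (frob_add _ _) _; exact: lerD.
Qed.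
End Frob.
Section Frob2.
Context {R : realType} {n : nat}.
Implicit Types A B : 'M[R]_n.
Lemma entry_le_mxnorm A i j : `|A i j| <= `|A|.
Proof.
rewrite [leRHS]/Num.Def.normr /= mx_normrE.
exact: (le_bigmax _ (fun ij : 'I_n * 'I_n => `|A ij.1 ij.2|) (i, j)).
Qed.
Lemma mxnorm_le_frob A : `|A| <= frob A.
Proof.
rewrite [leLHS]/Num.Def.normr /= mx_normrE.
apply: bigmax_le; first exact: frob_ge0.
by move=> ij _; exact: entry_le_frob.
Qed.
Lemma frob_le_mxnorm A : frob A <= n%:R * `|A|.
Proof.
have h0 : 0 <= n%:R * `|A| by rewrite mulr_ge0 // ?normr_ge0.
rewrite frobE -(ger0_norm h0) -sqrtr_sqr.
rewrite ler_sqrt ?sqr_ge0 // /fsq.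
have -> : (n%:R * `|A|) ^+ 2 = \sum_(i < n) \sum_(j < n) `|A| ^+ 2.
  rewrite sumr_const sumr_const card_ord.
  rewrite -mulrnA -[RHS]mulr_natl natrM.
  move: (`|A|) (n%:R : R) => a m.
  ring.
apply: ler_sum => i _; apply: ler_sum => j _.
have -> : A i j ^+ 2 = `|A i j| ^+ 2 by rewrite real_normK // num_real.
by rewrite lerXn2r // ?nnegrE ?normr_ge0 // entry_le_mxnorm.
Qed.
Lemma frob_exp A k : frob (A ^+ k.+1) <= frob A ^+ k.+1.
Proof.
elim: k => [|k IH]; first by rewrite !expr1.
rewrite exprS [in leRHS]exprS -mulmxE.
apply: le_trans (frob_mul _ _) _.
by rewrite ler_wpM2l ?frob_ge0.
Qed.
Lemma lim_frob_le (S : nat -> 'M[R]_n) L c :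
  S @ \oo --> L -> (forall N, frob (S N) <= c) -> frob L <= c.
Proof.
move=> SL Sc; apply/ler_addgt0Pr => e e0.
have e1 : 0 < e / (n%:R + 1) by rewrite divr_gt0 // ltr_wpDl.
move/cvgrPdist_lt: SL => /(_ _ e1) [N _ HN].
have := HN N (leqnn N) => /= H.
have -> : L = S N + (L - S N) by rewrite addrC subrK.
apply: le_trans (frob_add _ _) _; apply: lerD => //.
apply: le_trans (frob_le_mxnorm _) _.
apply: le_trans (_ : n%:R * (e / (n%:R + 1)) <= _).
  by rewrite ler_wpM2l // ltW.
by rewrite mulrA ler_pdivrMr ?ltr_wpDl // mulrDr mulr1 mulrC lerDl ltW.
Qed.
End Frob2.

Module ExpMod.
Section ExpM.
Context {R : realType} {n : nat}.
#[local] HB.instance Definition _ := NormedModule.on 'M[R]_n.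
Lemma exp_partial_le (g : R) N : 0 <= g ->
  \sum_(0 <= k < N) exp_coeff g k <= expR g.
Proof.
move=> g0.
have -> : expR g = limn (series (exp_coeff g)).
  by rewrite expRE /pseries exp_coeffE.
apply: (nondecreasing_cvgn_le _ (is_cvg_series_exp_coeff g) N).
by apply: nondecreasing_series => k _ _; exact: exp_coeff_ge0.
Qed.
Lemma frob_expM (A : 'M[R]_n) : (0 < n)%N ->
  frob (expM A) <= Num.sqrt n%:R * expR (frob A).
Proof.
move=> n0.
set u := fun k : nat => (k`!%:R)^-1 *: A ^+ k.
set g := frob A.
have g0 : 0 <= g by exact: frob_ge0.
have n1 : (1 : R) <= n%:R by rewrite ler1n.
have sn1 : 1 <= Num.sqrt (n%:R : R) by rewrite -{1}sqrtr1 ler_sqrt ?ler0n.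
have ub k : frob (u k) <= Num.sqrt n%:R * exp_coeff g k.
  rewrite /u frob_scale ger0_norm ?invr_ge0 //.
  case: k => [|k].
    rewrite expr0 /= frob1 fact0 invr1 mul1r /exp_coeff /= expr0 divr1 mulr1 //.
  rewrite /exp_coeff /= mulrC.
  apply: le_trans (ler_peMl _ sn1); last by rewrite divr_ge0 // exprn_ge0.
  by rewrite ler_wpM2r ?invr_ge0 // frob_exp.
have cvS : cvgn (series u).
  apply: normed_cvg.
  apply: (series_le_cvg (v_ := Num.sqrt n%:R *: exp_coeff g)).
  - by move=> k; exact: normr_ge0.
  - by move=> k; rewrite /= mulr_ge0 ?sqrtr_ge0 // exp_coeff_ge0.
  - by move=> k; apply: le_trans (mxnorm_le_frob _) (ub k).
  - by apply: is_cvg_seriesZ; exact: is_cvg_series_exp_coeff.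
apply: (@lim_frob_le R n (series u) (expM A) _ cvS) => N.
rewrite /series /=.
apply: le_trans (frob_sum _ _ u) _.
apply: le_trans (_ : \sum_(0 <= k < N) Num.sqrt n%:R * exp_coeff g k <= _).
  by apply: ler_sum => k _; exact: ub.
by rewrite -mulr_sumr ler_wpM2l ?sqrtr_ge0 // exp_partial_le.
Qed.
End ExpM.
End ExpMod.
Import ExpMod.

Section Sand.
Context {R : realType} {n : nat}.
Lemma quadf_delta (K : 'M[R]_n) j : quadf K (delta_mx j 0) = K j j.
Proof. by rewrite /quadf trmx_delta -rowE -colE !mxE. Qed.
Lemma sqnorm2_delta j : sqnorm2 (delta_mx j 0 : 'cV[R]_n) = 1.
Proof.
rewrite /sqnorm2 (bigD1 j) //= big1 ?addr0; first by rewrite mxE !eqxx expr1n.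
by move=> i /negPf ij; rewrite mxE ij /= expr0n.
Qed.
Lemma fsq_chol (K L : 'M[R]_n) c :
  (forall z, quadf K z <= c * sqnorm2 z) -> K = L^T *m L -> fsq L <= n%:R * c.
Proof.
move=> Hq KL.
have -> : fsq L = \sum_j K j j.
  rewrite /fsq exchange_big /=; apply: eq_bigr => j _.
  by rewrite KL mxE; apply: eq_bigr => k _; rewrite mxE expr2.
apply: (@le_trans _ _ (\sum_(j < n) c)); last first.
  by rewrite sumr_const card_ord mulr_natl.
apply: ler_sum => j _.
by have := Hq (delta_mx j 0); rewrite quadf_delta sqnorm2_delta mulr1.
Qed.
Lemma sand_bound (L M : 'M[R]_n) (a : R) : 0 <= a ->
  frob (a *: (L^T *m M *m L)) <= a * (fsq L * frob M).
Proof.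
move=> a0; rewrite frob_scale ger0_norm // ler_wpM2l //.
apply: le_trans (frob_mul _ _) _.
apply: le_trans (_ : frob L^T * frob M * frob L <= _).
  by rewrite ler_wpM2r ?frob_ge0 // frob_mul.
by rewrite frob_tr -frob_sqr expr2 mulrAC.
Qed.
End Sand.

Section Det.
Context {R : realType} {n : nat}.
Lemma sq_entry_le_fsq (A : 'M[R]_n) i j : A i j ^+ 2 <= fsq A.
Proof.
rewrite -frob_sqr -real_normK ?num_real //.
by rewrite lerXn2r // ?nnegrE ?normr_ge0 ?frob_ge0 // entry_le_frob.
Qed.
Lemma fsq_calL (h : R -> R -> R) (a : 'I_n -> R) (G : 'M[R]_n) (ca ch : 'I_n -> R) :
  (forall j g, 0 <= h (a j) g) ->
  (forall j g, h (a j) g <= ca j + ch j * g ^+ 2) -> (forall j, 0 <= ch j) ->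
  fsq (calL h a G) <= \sum_j ca j + (1 + \sum_j ch j) * fsq G.
Proof.
move=> h0 hb ch0.
have step j j' : (calL h a G) j j' ^+ 2 <=
    G j j' ^+ 2 + (if j == j' then ca j + ch j * fsq G else 0).
  rewrite mxE; case: ltnP => jj'.
    have ne : j != j' by apply/eqP => e; rewrite e ltnn in jj'.
    by rewrite (negPf ne) addr0.
  case: eqP => [<-|_]; last by rewrite expr0n /= addr0 sqr_ge0.
  rewrite sqr_sqrtr ?h0 //; apply: le_trans (hb j _) _.
  apply: (@le_trans _ _ (ca j + ch j * fsq G)).
    by rewrite lerD2l ler_wpM2l // sq_entry_le_fsq.
  by rewrite lerDr sqr_ge0.
rewrite {1}/fsq.
apply: (@le_trans _ _ (\sum_j (\sum_j' G j j' ^+ 2 + (ca j + ch j * fsq G)))).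
  apply: ler_sum => j _.
  apply: le_trans (ler_sum _ (fun j' _ => step j j')) _.
  rewrite big_split /= lerD2l (bigD1 j) //= eqxx big1 ?addr0 //.
  by move=> k /negPf; rewrite eq_sym => ->.
rewrite big_split /= big_split /= -/(fsq G) -mulr_suml.
by rewrite mulrDl mul1r addrCA addrA.
Qed.
End Det.

Section Det2.
Context {R : realType} {n : nat}.
Lemma frob_scalar (e : R) : frob (e%:M : 'M[R]_n) = `|e| * Num.sqrt n%:R.
Proof. by rewrite -scalemx1 frob_scale frob1. Qed.
Lemma fsqL_bound (K L : 'M[R]_n) kt1 :
  (forall z, quadf K z <= (Num.sqrt n%:R)^-1 * kt1 * sqnorm2 z) ->
  K = L^T *m L -> (0 < n)%N -> fsq L <= Num.sqrt n%:R * kt1.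
Proof.
move=> Hq KL n0; apply: le_trans (fsq_chol _ _ _ Hq KL) _.
have sn : 0 < Num.sqrt (n%:R : R) by rewrite sqrtr_gt0 ltr0n.
set s := Num.sqrt (n%:R : R).
have -> : (n%:R : R) = s ^+ 2 by rewrite sqr_sqrtr ?ler0n.
have -> : s ^+ 2 * (s^-1 * kt1) = s * kt1 by field; rewrite gt_eqF.
by [].
Qed.
Lemma det_exp (K L G : 'M[R]_n) kt1 eps b :
  (0 < n)%N -> 0 < eps -> 0 <= kt1 ->
  (forall z, quadf K z <= (Num.sqrt n%:R)^-1 * kt1 * sqnorm2 z) ->
  K = L^T *m L -> frob G <= b ->
  frob ((1 + eps)^-1 *: (L^T *m (eps%:M + expM G) *m L))
    <= n%:R * kt1 * Num.sqrt n%:R * (eps + expR b) / (1 + eps).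
Proof.
move=> n0 e0 k0 Hq KL Gb.
have sn : 0 < Num.sqrt (n%:R : R) by rewrite sqrtr_gt0 ltr0n.
have sn1 : 1 <= Num.sqrt (n%:R : R) by rewrite -{1}sqrtr1 ler_sqrt ?ler0n ?ler1n.
have a0 : 0 <= (1 + eps)^-1 by rewrite invr_ge0 addr_ge0 // ltW.
apply: le_trans (sand_bound _ _ _ a0) _.
have fM : frob (eps%:M + expM G) <= Num.sqrt n%:R * (eps + expR b).
  apply: le_trans (frob_add _ _) _.
  rewrite frob_scalar gtr0_norm // mulrDr; apply: lerD; first by rewrite mulrC.
  apply: le_trans (frob_expM _ n0) _.
  by rewrite ler_wpM2l ?sqrtr_ge0 // ler_expR.
have fL := fsqL_bound _ _ _ Hq KL n0.
rewrite mulrC ler_wpM2r //.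
apply: le_trans (_ : Num.sqrt n%:R * kt1 * (Num.sqrt n%:R * (eps + expR b)) <= _).
  by apply: ler_pM => //; [exact: fsq_ge0 | exact: frob_ge0].
have ex0 : 0 <= eps + expR b by rewrite addr_ge0 ?expR_ge0 // ltW.
set s := Num.sqrt (n%:R : R) in sn sn1 *; set X := eps + expR b in ex0 *.
have -> : (n%:R : R) = s ^+ 2 by rewrite sqr_sqrtr ?ler0n.
have -> : s * kt1 * (s * X) = s ^+ 2 * kt1 * X by ring.
have -> : s ^+ 2 * kt1 * s * X = s * (s ^+ 2 * kt1 * X) by ring.
by rewrite ler_peMl // mulr_ge0 // mulr_ge0 // sqr_ge0.
Qed.
Lemma det_sq (K L G C : 'M[R]_n) kt1 eps b g0 g1 :
  (0 < n)%N -> 0 < eps -> 0 <= kt1 -> 0 <= g1 ->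
  (forall z, quadf K z <= (Num.sqrt n%:R)^-1 * kt1 * sqnorm2 z) ->
  K = L^T *m L -> frob G <= b -> fsq C <= g0 + g1 * fsq G ->
  frob ((1 + eps)^-1 *: (L^T *m (eps%:M + C^T *m C) *m L))
    <= n%:R * kt1 * (Num.sqrt n%:R * eps + g0 + g1 * b ^+ 2) / (1 + eps).
Proof.
move=> n0 e0 k0 g10 Hq KL Gb Cb.
have sn : 0 < Num.sqrt (n%:R : R) by rewrite sqrtr_gt0 ltr0n.
have sn1 : 1 <= Num.sqrt (n%:R : R) by rewrite -{1}sqrtr1 ler_sqrt ?ler0n ?ler1n.
have a0 : 0 <= (1 + eps)^-1 by rewrite invr_ge0 addr_ge0 // ltW.
apply: le_trans (sand_bound _ _ _ a0) _.
have fM : frob (eps%:M + C^T *m C) <= Num.sqrt n%:R * eps + g0 + g1 * b ^+ 2.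
  apply: le_trans (frob_add _ _) _.
  rewrite frob_scalar gtr0_norm // -addrA; apply: lerD; first by rewrite mulrC.
  apply: le_trans (frob_mul _ _) _; rewrite frob_tr -expr2 frob_sqr.
  apply: le_trans Cb _; rewrite lerD2l ler_wpM2l // -frob_sqr.
  by rewrite lerXn2r // ?nnegrE ?frob_ge0 // (le_trans (frob_ge0 G)).
have fL := fsqL_bound _ _ _ Hq KL n0.
rewrite mulrC ler_wpM2r //.
apply: ler_pM => //; [exact: fsq_ge0 | exact: frob_ge0 |].
apply: le_trans fL _; rewrite ler_wpM2r //.
set s := Num.sqrt (n%:R : R) in sn sn1 *.
have -> : (n%:R : R) = s ^+ 2 by rewrite sqr_sqrtr ?ler0n.
by rewrite expr2 ler_peMl // ltW.
Qed.
End Det2.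
Section Ser.
Context {R : realType}.
Lemma partial_le_fine (u : nat -> R) N : (forall i, 0 <= u i) ->
  (\sum_(i <oo) (u i)%:E)%E \is a fin_num ->
  \sum_(0 <= i < N) u i <= fine (\sum_(i <oo) (u i)%:E)%E.
Proof.
move=> u0 fin.
have := @nneseries_lim_ge R (fun i => (u i)%:E) xpredT 0 N (fun i _ _ => u0 i).
rewrite sumEFin -{1}(fineK fin) lee_fin.
by [].
Qed.
Lemma series_le (u : nat -> R) M : (forall i, 0 <= u i) ->
  (forall N, \sum_(0 <= i < N) u i <= M) ->
  (\sum_(i <oo) (u i)%:E <= M%:E)%E.
Proof.
move=> u0 uM; apply: lime_le.
  by apply: is_cvg_nneseries => i _ _; rewrite lee_fin.
by apply: nearW => N; rewrite sumEFin lee_fin.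
Qed.
Lemma series_bounds (c y : nat -> R) :
  (forall i, 0 <= c i) ->
  (\sum_(i <oo) (c i)%:E)%E \is a fin_num ->
  (\sum_(i <oo) (c i * y i ^+ 2)%:E)%E \is a fin_num ->
  let C := fine (\sum_(i <oo) (c i)%:E)%E in
  let q := fine (\sum_(i <oo) (c i * y i ^+ 2)%:E)%E in
  let S := (\sum_(i <oo) (c i * `|y i|)%:E)%E in
  S \is a fin_num /\ 0 <= fine S /\ fine S <= Num.sqrt (C * q) /\
  (forall N, \sum_(0 <= i < N) c i * `|y i| <= fine S).
Proof.
move=> c0 fC fQ C q S.
have t0 i : 0 <= c i * `|y i| by rewrite mulr_ge0.
have part N : \sum_(0 <= i < N) c i * `|y i| <= Num.sqrt (C * q).
  have s0 : 0 <= \sum_(0 <= i < N) c i * `|y i| by apply: sumr_ge0.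
  have C0 : 0 <= C by apply: fine_ge0; apply: nneseries_ge0 => i _ _; rewrite lee_fin.
  have q0 : 0 <= q.
    by apply: fine_ge0; apply: nneseries_ge0 => i _ _; rewrite lee_fin mulr_ge0 ?sqr_ge0.
  rewrite -(ger0_norm s0) -sqrtr_sqr ler_sqrt; last by rewrite mulr_ge0.
  apply: (@le_trans _ _ ((\sum_(0 <= i < N) c i) * (\sum_(0 <= i < N) c i * y i ^+ 2))).
    rewrite !big_mkord.
    have := cs_ineq (fun i : 'I_N => Num.sqrt (c i)) (fun i : 'I_N => Num.sqrt (c i) * `|y i|).
    have E1 i : Num.sqrt (c i) * (Num.sqrt (c i) * `|y i|) = c i * `|y i|.
      by rewrite mulrA -expr2 sqr_sqrtr.
    have E2 i : Num.sqrt (c i) ^+ 2 = c i by rewrite sqr_sqrtr.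
    have E3 i : (Num.sqrt (c i) * `|y i|) ^+ 2 = c i * y i ^+ 2.
      by rewrite exprMn sqr_sqrtr // real_normK ?num_real.
    by rewrite (eq_bigr _ (fun (i : 'I_N) _ => E1 i)) (eq_bigr _ (fun (i : 'I_N) _ => E2 i)) (eq_bigr _ (fun (i : 'I_N) _ => E3 i)).
  apply: ler_pM.
  - by apply: sumr_ge0.
  - by apply: sumr_ge0 => i _; rewrite mulr_ge0 ?sqr_ge0.
  - exact: partial_le_fine.
  - by apply: partial_le_fine => // i; rewrite mulr_ge0 ?sqr_ge0.
have S0 : (0 <= S)%E by apply: nneseries_ge0 => i _ _; rewrite lee_fin.
have SM : (S <= (Num.sqrt (C * q))%:E)%E by apply: series_le.
have fS : S \is a fin_num by rewrite ge0_fin_numE // (le_lt_trans SM) ?ltry.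
split => //; split; first exact: fine_ge0.
split; first by rewrite -lee_fin fineK.
by move=> N; apply: partial_le_fine.
Qed.
End Ser.
Section Prob.
Context {dT : measure_display} {T : measurableType dT} {R : realType} (P : probability T R).
Lemma E2_one (X : {RV P >-> R}) : (X : T -> R) \in Lfun P 2%E ->
  ('E_P[X] = 0)%E -> ('V_P[X] = 1)%E -> (\int[P]_w ((X w) ^+ 2)%:E = 1)%E.
Proof.
move=> L2 E0 V1.
have := varianceE L2; rewrite V1 E0.
rewrite expeS mul0e sube0 => ->.
by rewrite unlock exprfctE.
Qed.
Lemma Q_props (eta : nat -> {RV P >-> R}) (c : nat -> R) :
  (forall i, 0 <= c i) ->
  (forall i, (\int[P]_w ((eta i w) ^+ 2)%:E = 1)%E) ->
  (\sum_(i <oo) (c i)%:E < +oo)%E ->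
  let Q := fun w => (\sum_(i <oo) (c i * eta i w ^+ 2)%:E)%E in
  measurable_fun setT Q /\ (\int[P]_w Q w = \sum_(i <oo) (c i)%:E)%E /\
  {ae P, forall w, Q w \is a fin_num}.
Proof.
move=> c0 E1 Cfin Q.
have mt i : measurable_fun setT (fun w => (c i * eta i w ^+ 2)%:E).
  apply/measurable_EFinP.
  exact: (measurable_funM (measurable_cst _) (measurable_funX _ (measurable_funPT (eta i)))).
have t0 i w : (0 <= (c i * eta i w ^+ 2)%:E)%E by rewrite lee_fin mulr_ge0 ?sqr_ge0.
have mQ : measurable_fun setT Q.
  exact: (ge0_emeasurable_sum (P := xpredT) (fun k x _ _ => t0 k x) (fun k _ => mt k)).
have IQ : (\int[P]_w Q w = \sum_(i <oo) (c i)%:E)%E.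
  rewrite /Q (integral_nneseries P measurableT mt (fun i w _ => t0 i w)).
  apply: eq_eseriesr => i _.
  under eq_integral do rewrite EFinM.
  rewrite ge0_integralZl_EFin //.
  - by rewrite E1 mule1.
  - by move=> w _; rewrite lee_fin sqr_ge0.
  - by apply/measurable_EFinP; exact: (measurable_funX _ (measurable_funPT (eta i))).
split => //; split => //.
have Q0 w : (0 <= Q w)%E by apply: nneseries_ge0 => i _ _; exact: t0.
have iQ : P.-integrable setT Q.
  apply/integrableP; split => //.
  under eq_integral do rewrite gee0_abs ?Q0 //.
  by rewrite IQ.
have := integrable_ae measurableT iQ.
by apply: filterS => w /(_ I).
Qed.
End Prob.
Theorem proposition3
  (R : realType) (d n : nat) (D : set 'rV[R]_d)
  (Kb Lb : 'rV[R]_d -> 'M[R]_n) (k0 kt1 eps : R)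
  (dT : measure_display) (T : measurableType dT) (P : probability T R)
  (G0 : 'rV[R]_d -> 'M[R]_n) (sigma : nat -> R)
  (Gi : nat -> 'rV[R]_d -> 'M[R]_n) (eta : nat -> {RV P >-> R})
  (G : 'rV[R]_d -> T -> 'M[R]_n) :
  (0 < d)%N -> (0 < n)%N -> open D -> bounded_set D ->
  (* normalization of the deterministic mean model [K_] = [L_]^T [L_] *)
  0 < k0 -> k0 < kt1 ->
  (forall x, D x -> sym_mx (Kb x)) ->
  (forall x (z : 'cV[R]_n), D x ->
      k0 * sqnorm2 z <= quadf (Kb x) z /\
      quadf (Kb x) z <= (Num.sqrt n%:R)^-1 * kt1 * sqnorm2 z) ->
  (forall x, D x -> upper_tri (Lb x) /\ Kb x = (Lb x)^T *m Lb x) ->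
  0 < eps ->
  (* the random field [G] and its Karhunen-Loeve expansion *)
  (forall x, D x -> sym_mx (G0 x)) ->
  (supnormF D G0 < +oo)%E ->
  (forall i, 0 < sigma i) -> (forall i, sigma i.+1 <= sigma i) ->
  (forall i x, D x -> sym_mx (Gi i x)) ->
  (forall i, (eta i : T -> R) \in Lfun P 2%E) ->
  (forall i, ('E_P[eta i] = 0)%E) ->
  (forall i, ('V_P[eta i] = 1)%E) ->
  (forall i j, i <> j -> covariance P (eta i) (eta j) = 0%E) ->
  (forall x, D x -> {ae P, forall w,
      (fun N : nat => G0 x + \sum_(i < N) (Num.sqrt (sigma i) * eta i w) *: Gi i x)
        @ \oo --> G x w}) ->
  (* summability assumption *)
  (\sum_(0 <= i <oo) ((Num.sqrt (sigma i))%:E * supnormF D (Gi i)) < +oo)%E ->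
  let k1 := n%:R * kt1 in
  let bG := betaG D G0 sigma Gi (fun i => (eta i : T -> R)) in
  (* (i) exponential type *)
  (forall x, D x -> {ae P, forall w,
      (bG w < +oo)%E /\
      frob ((1 + eps)^-1 *: ((Lb x)^T *m (eps%:M + expM (G x w)) *m Lb x))
        <= k1 * Num.sqrt n%:R * (eps + expR (fine (bG w))) / (1 + eps)})
  /\
  (* (ii) square type *)
  (forall (h : R -> R -> R) (a : 'I_n -> R),
      (forall j, 0 < a j) ->
      (forall a0, 0 < a0 -> forall g, 0 < h a0 g) ->
      (forall a0, 0 < a0 -> forall g g', g < g' -> h a0 g < h a0 g') ->
      (forall a0, 0 < a0 -> exists ca ch, 0 < ca /\ 0 < ch /\
                                  forall g, h a0 g <= ca + ch * g ^+ 2) ->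
      exists gamma0 gamma1 : R, 0 < gamma0 /\ 0 < gamma1 /\
        let beta := fun w => k1 * (Num.sqrt n%:R * eps + gamma0
                                   + gamma1 * fine (bG w) ^+ 2) / (1 + eps) in
        (forall x, D x -> {ae P, forall w,
           (bG w < +oo)%E /\
           frob ((1 + eps)^-1 *: ((Lb x)^T *m
                 (eps%:M + (calL h a (G x w))^T *m calL h a (G x w)) *m Lb x))
             <= beta w}) /\
        (\int[P]_w (beta w)%:E < +oo)%E).
Proof.
move=> d0 n0 oD bD k0pos k0kt1 Ksym Hquad HLK eps0 G0sym G0fin sig0 sigdec
  Gisym etaL2 etaE etaV etacov KLc Gsum k1 bG.
have kt10 : 0 <= kt1 by apply: ltW; apply: lt_trans k0kt1.
have E1 i : (\int[P]_w ((eta i w) ^+ 2)%:E = 1)%E := @E2_one _ _ _ P (eta i) (etaL2 i) (etaE i) (etaV i).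
have [[x0 Dx0]|Dempty] := pselect (exists x, D x); last first.
  have D0 : D = set0 by apply/seteqP; split => x // Dx; apply: Dempty; exists x.
  have bGy w : bG w = -oo%E.
    by rewrite /bG /betaG /supnormF D0 image_set0 ereal_sup0 addNye.
  split; first by move=> x Dx; exfalso; apply: Dempty; exists x.
  move=> h a _ _ _ _; exists 1, 1; split => //; split => //.
  move=> beta; split; first by move=> x Dx; exfalso; apply: Dempty; exists x.
  have -> : (fun w => (beta w)%:E) = cst (k1 * (Num.sqrt n%:R * eps + 1 + 1 * 0 ^+ 2) / (1 + eps))%:E.
    by apply/funext => w; rewrite /beta bGy.
  rewrite integral_cst //.
  set cc := (X in (X%:E * _)%E).
  have : (cc%:E * P [set: T])%E \is a fin_num by rewrite fin_numM // fin_num_measure.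
  by case/fin_numPlt/andP.
have sup_ge (H : 'rV[R]_d -> 'M[R]_n) x : D x -> ((frob (H x))%:E <= supnormF D H)%E.
  by move=> Dx; apply: ereal_sup_ubound; exists x.
have sup_ge0 (H : 'rV[R]_d -> 'M[R]_n) : (0 <= supnormF D H)%E.
  by apply: le_trans (sup_ge H x0 Dx0); rewrite lee_fin frob_ge0.
have fin0 : supnormF D G0 \is a fin_num by rewrite ge0_fin_numE.
set s0 := fine (supnormF D G0).
have s00 : 0 <= s0 by apply: fine_ge0.
have G0le x : D x -> frob (G0 x) <= s0.
  by move=> Dx; rewrite -lee_fin /s0 fineK // sup_ge.
have tge0 i : (0 <= (Num.sqrt (sigma i))%:E * supnormF D (Gi i))%E.
  by rewrite mule_ge0 // lee_fin sqrtr_ge0.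
have finI i : supnormF D (Gi i) \is a fin_num.
  have tle : ((Num.sqrt (sigma i))%:E * supnormF D (Gi i) <=
      \sum_(j <oo) ((Num.sqrt (sigma j))%:E * supnormF D (Gi j)))%E.
    apply: le_trans (nneseries_lim_ge i.+1 (fun j _ _ => tge0 j)).
    rewrite big_nat_recr //= leeDr //.
    by apply: sume_ge0 => j _; exact: tge0.
  have tlt := le_lt_trans tle Gsum.
  rewrite ge0_fin_numE // ltNge leye_eq; apply/negP => /eqP E.
  by move: tlt; rewrite E gt0_muley ?lte_fin ?sqrtr_gt0 // ltxx.
set s := fun i => fine (supnormF D (Gi i)).
set c := fun i => Num.sqrt (sigma i) * s i.
have c0 i : 0 <= c i by rewrite mulr_ge0 ?sqrtr_ge0 // fine_ge0.
have Gile i x : D x -> frob (Gi i x) <= s i.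
  by move=> Dx; rewrite -lee_fin /s fineK // sup_ge.
have Csum : (\sum_(i <oo) (c i)%:E =
    \sum_(i <oo) ((Num.sqrt (sigma i))%:E * supnormF D (Gi i)))%E.
  by apply: eq_eseriesr => i _; rewrite /c /s EFinM fineK.
have Cfin : (\sum_(i <oo) (c i)%:E < +oo)%E by rewrite Csum.
have CfinN : (\sum_(i <oo) (c i)%:E)%E \is a fin_num.
  by rewrite ge0_fin_numE // nneseries_ge0 // => i _ _; rewrite lee_fin.
set C := fine (\sum_(i <oo) (c i)%:E)%E.
have C0 : 0 <= C by apply: fine_ge0; apply: nneseries_ge0 => i _ _; rewrite lee_fin.
pose SS := fun w => (\sum_(i <oo) (c i * `|eta i w|)%:E)%E.
have bGE w : bG w = (s0%:E + SS w)%E.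
  rewrite /bG /betaG /s0 fineK //; congr (_ + _)%E.
  by apply: eq_eseriesr => i _; rewrite /c /s !EFinM fineK.
have [mQ [IQ aeQ]] := Q_props P eta c c0 E1 Cfin.
set Q := (fun w => \sum_(i <oo) (c i * eta i w ^+ 2)%:E)%E in mQ IQ aeQ.
have pw w : Q w \is a fin_num ->
  (bG w < +oo)%E /\ 0 <= fine (bG w) /\ fine (bG w) <= s0 + Num.sqrt (C * fine (Q w)) /\
  (forall N, s0 + \sum_(0 <= i < N) c i * `|eta i w| <= fine (bG w)).
  move=> Qf.
  have H := series_bounds c (fun i => eta i w) c0 CfinN Qf.
  cbv zeta in H; case: H => Sf [S0 [SM Spart]].
  have Sf' : SS w \is a fin_num := Sf.
  have S0' : 0 <= fine (SS w) := S0.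
  have SM' : fine (SS w) <= Num.sqrt (C * fine (Q w)) := SM.
  have Spart' : forall N, \sum_(0 <= i < N) c i * `|eta i w| <= fine (SS w) := Spart.
  clear Sf S0 SM Spart.
  have fbG : fine (bG w) = s0 + fine (SS w) by rewrite bGE -(fineK Sf') -EFinD.
  split; first by rewrite bGE -(fineK Sf') -EFinD ltry.
  rewrite fbG; split; first exact: addr_ge0.
  split; first by rewrite lerD2l.
  by move=> N; rewrite lerD2l.
have pwG x w : D x -> Q w \is a fin_num ->
    (fun N : nat => G0 x + \sum_(i < N) (Num.sqrt (sigma i) * eta i w) *: Gi i x)
        @ \oo --> G x w ->
    frob (G x w) <= fine (bG w).
  move=> Dx Qf Conv.
  apply: (lim_frob_le _ _ _ Conv) => N.
  apply: le_trans (frob_add _ _) _.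
  have [_ [_ [_ Hp]]] := pw w Qf.
  apply: le_trans (Hp N).
  apply: lerD; first exact: G0le.
  apply: le_trans (frob_sum _ _ _) _.
  rewrite big_mkord; apply: ler_sum => i _.
  rewrite frob_scale normrM (ger0_norm (sqrtr_ge0 _)) /c.
  by rewrite [in leRHS]mulrAC ler_wpM2l ?mulr_ge0 ?sqrtr_ge0 // Gile.
split.
  move=> x Dx; move: aeQ (KLc x Dx); apply: filterS2 => w Qf Conv.
  have [bGlt _] := pw w Qf; split => //.
  exact: (det_exp _ _ _ _ _ _ n0 eps0 kt10 (fun z => (Hquad x z Dx).2) (HLK x Dx).2
    (pwG x w Dx Qf Conv)).
move=> h a a0 hpos hmono hq.
have ex : forall j : 'I_n, exists p : R * R,
    0 < p.1 /\ 0 < p.2 /\ forall g, h (a j) g <= p.1 + p.2 * g ^+ 2.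
  by move=> j; have [ca [ch [? [? ?]]]] := hq (a j) (a0 j); exists (ca, ch).
have [f Hf] := choice ex.
pose ca := fun j => (f j).1; pose ch := fun j => (f j).2.
have Hh j g : 0 <= h (a j) g := ltW (hpos _ (a0 j) g).
have Hb j g : h (a j) g <= ca j + ch j * g ^+ 2 := (Hf j).2.2 g.
have ch0 j : 0 <= ch j := ltW (Hf j).2.1.
have sca : 0 <= \sum_j ca j by apply: sumr_ge0 => j _; apply: ltW; case: (Hf j).
have sch : 0 <= \sum_j ch j by apply: sumr_ge0 => j _; exact: ch0.
exists (\sum_j ca j + 1), (1 + \sum_j ch j).
have g10 : 0 <= 1 + \sum_j ch j by lra.
split; first lra.
split; first lra.
move=> beta.
have fsqC M : fsq (calL h a M) <= (\sum_j ca j + 1) + (1 + \sum_j ch j) * fsq M.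
  apply: le_trans (fsq_calL h a M ca ch Hh Hb ch0) _; lra.
split.
  move=> x Dx; move: aeQ (KLc x Dx); apply: filterS2 => w Qf Conv.
  have [bGlt _] := pw w Qf; split => //.
  exact: (det_sq _ _ _ _ _ _ _ _ _ n0 eps0 kt10 g10 (fun z => (Hquad x z Dx).2) (HLK x Dx).2
    (pwG x w Dx Qf Conv) (fsqC _)).
set g0 := \sum_j ca j + 1; set g1 := 1 + \sum_j ch j.
have k10 : 0 <= k1 by rewrite mulr_ge0 ?ler0n.
have ie0 : 0 <= (1 + eps)^-1 by rewrite invr_ge0; lra.
set X := Num.sqrt n%:R * eps + g0.
have X0 : 0 <= X by rewrite /X /g0 addr_ge0 ?mulr_ge0 ?sqrtr_ge0 //; lra.
pose A := k1 * (X + g1 * (2 * s0 ^+ 2)) / (1 + eps).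
pose B := k1 * (g1 * (2 * C)) / (1 + eps) + 1.
have A0 : 0 <= A by rewrite /A mulr_ge0 // mulr_ge0 // addr_ge0 // mulr_ge0 // mulr_ge0 // sqr_ge0.
have B1 : 1 <= B by rewrite /B lerDr mulr_ge0 // mulr_ge0 // mulr_ge0 // mulr_ge0.
have Q0 w : (0 <= Q w)%E by apply: nneseries_ge0 => i _ _; rewrite lee_fin mulr_ge0 ?sqr_ge0.
have beta0 w : 0 <= beta w.
  by rewrite /beta mulr_ge0 // mulr_ge0 // addr_ge0 // mulr_ge0 // sqr_ge0.
have bound w : ((beta w)%:E <= A%:E + B%:E * Q w)%E.
  have [Qf|Qnf] := boolP (Q w \is a fin_num); last first.
    move: Qnf; rewrite ge0_fin_numE // -leNgt leye_eq => /eqP ->.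
    by rewrite gt0_muley ?lte_fin ?(lt_le_trans ltr01 B1) // addey // leey.
  have [_ [f0 [fle _]]] := pw w Qf.
  have q0 : 0 <= fine (Q w) by apply: fine_ge0.
  rewrite -(fineK Qf) -EFinM -EFinD lee_fin.
  set q := fine (Q w) in q0 fle *.
  set r := Num.sqrt (C * q) in fle.
  have r2 : r ^+ 2 = C * q by rewrite sqr_sqrtr // mulr_ge0.
  have r0 : 0 <= r by apply: sqrtr_ge0.
  set fb := fine (bG w) in f0 fle *.
  have sq : fb ^+ 2 <= 2 * s0 ^+ 2 + 2 * (C * q).
    have h1 : fb ^+ 2 <= (s0 + r) ^+ 2.
      by rewrite lerXn2r // ?nnegrE // addr_ge0.
    have e : 2 * s0 ^+ 2 + 2 * r ^+ 2 - (s0 + r) ^+ 2 = (s0 - r) ^+ 2 by ring.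
    have := sqr_ge0 (s0 - r); rewrite -e -r2; lra.
  apply: (@le_trans _ _ (k1 * (X + g1 * (2 * s0 ^+ 2 + 2 * (C * q))) / (1 + eps))).
    by rewrite /beta -/X ler_wpM2r // ler_wpM2l // lerD2l ler_wpM2l.
  have -> : k1 * (X + g1 * (2 * s0 ^+ 2 + 2 * (C * q))) / (1 + eps) = A + (B - 1) * q.
    by rewrite /A /B; ring.
  have e : (B - 1) * q = B * q - q by ring.
  rewrite e; lra.
have mSS : measurable_fun setT SS.
  apply: (ge0_emeasurable_sum (P := xpredT)).
    by move=> k x _ _; rewrite lee_fin mulr_ge0.
  move=> k _; apply/measurable_EFinP.
  exact: (measurable_funM (measurable_cst _)
    (measurableT_comp (@normr_measurable R setT) (measurable_funPT (eta k)))).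
have mbG : measurable_fun setT bG.
  have -> : bG = (cst s0%:E) \+ SS by apply/funext => w; rewrite bGE.
  exact: emeasurable_funD (measurable_cst _) mSS.
have mfb : measurable_fun setT (fun w => fine (bG w)).
  exact: (measurableT_comp (fine_measurable measurableT) mbG).
have mbeta : measurable_fun setT (fun w => (beta w)%:E).
  apply/measurable_EFinP.
  apply: (measurable_funM _ (measurable_cst _)).
  apply: (measurable_funM (measurable_cst _)).
  apply: (measurable_funD (measurable_cst _)).
  exact: (measurable_funM (measurable_cst _) (measurable_funX 2 mfb)).
have mBQ : measurable_fun setT (fun w => B%:E * Q w)%E by exact: measurable_funeM.
have BQ0 w : (0 <= B%:E * Q w)%E by rewrite mule_ge0 // lee_fin; lra.
have beta0E : forall w, setT w -> (0 <= (beta w)%:E)%E by move=> w _; rewrite lee_fin.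
apply: (le_lt_trans (ge0_le_integral P measurableT beta0E mbeta
   (emeasurable_funD (measurable_cst _) mBQ) (fun w _ => bound w))).
rewrite ge0_integralD //.
have B0 : 0 <= B by lra.
rewrite (ge0_integralZl_EFin P measurableT (fun w _ => Q0 w) mQ B0) IQ integral_cst //.
have : (A%:E * P [set: T] + B%:E * \sum_(i <oo) (c i)%:E)%E \is a fin_num.
  by rewrite fin_numD !fin_numM // fin_num_measure.
by case/fin_numPlt/andP.
Qed.
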